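(* Let $d,n\ge 2$, let $f$ be a stable update function, let $\mathcal D$ be an interaction distribution on $\Omega$ with full support, and let $\mathcal U^{(0)}$ be a strictly convex configuration of $n$ opinions in $\mathbb S^{d-1}$. Then, almost surely, $\mathcal U^{(t)}$ polarizes as $t\to\infty$.
   Context: Model: opinions are unit vectors in $\mathbb R^d$; a configuration is an $n$-tuple $\mathcal U=(\vec u_1,\dots,\vec u_n)$ and $A_{ij}=\langle\vec u_i,\vec u_j\rangle$. Update function $f:[-1,1]\to\mathbb R$. $\Omega=\{(i,j)\in[n]^2:i\ne j\}$, $\mathcal D$ a probability distribution on $\Omega$ (full support: every element has positive probability), $I^{(1)},I^{(2)},\dots$ i.i.d. with law $\mathcal D$; if the interaction at step $t$ is $(i,j)$ then $\vec u_k^{(t+1)}=\vec u_k^{(t)}$ for $k\ne i$ and $\vec u_i^{(t+1)}=\vec w/\|\vec w\|$ with $\vec w=\vec u_i^{(t)}+f(A^{(t)}_{ij})\vec u_j^{(t)}$. $f$ is stable if continuous and $\operatorname{sign}f(A)=\operatorname{sign}A$ for all $A\in[-1,1]$. Strictly convex: there exist $b_1,\dots,b_n\in\{\pm1\}$ with $\langle b_i\vec u_i,b_j\vec u_j\rangle>0$ for all $i,j$. Polarized: $\vec u_i=\pm\vec u_j$ for all $i,j$; $\mathcal U^{(t)}$ polarizes if $\lim_t\mathcal U^{(t)}$ exists and is polarized. *)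

(* Defs.v *)
From HB Require Import structures.
From mathcomp Require Import all_boot all_order all_algebra.
From mathcomp Require Import all_classical all_reals all_analysis.
Set Implicit Arguments. Unset Strict Implicit. Unset Printing Implicit Defensive.
Import Order.TTheory GRing.Theory Num.Theory numFieldNormedType.Exports.
Local Open Scope ring_scope.
Local Open Scope classical_set_scope.

Definition config (R : realType) (n d : nat) := 'I_n -> 'rV[R]_d.

Definition inner (R : realType) (d : nat) (u v : 'rV[R]_d) : R :=
  \sum_(k < d) u 0 k * v 0 k.

Definition vnorm (R : realType) (d : nat) (u : 'rV[R]_d) : R :=
  Num.sqrt (inner u u).

Definition unit_config (R : realType) (n d : nat) (U : config R n d) : Prop :=
  forall i, vnorm (U i) = 1.

Definition stable (R : realType) (f : R -> R) : Prop :=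
  {within [set x : R | -1 <= x <= 1], continuous f} /\
  forall A : R, -1 <= A <= 1 -> Num.sg (f A) = Num.sg A.

Definition strictly_convex (R : realType) (n d : nat) (U : config R n d) : Prop :=
  exists b : 'I_n -> R, (forall i, b i = 1 \/ b i = -1) /\
    forall i j, 0 < inner (b i *: U i) (b j *: U j).

Definition polarized (R : realType) (n d : nat) (U : config R n d) : Prop :=
  forall i j, U i = U j \/ U i = - U j.

Definition step (R : realType) (n d : nat) (f : R -> R) (U : config R n d)
    (p : 'I_n * 'I_n) : config R n d :=
  fun k => if k == p.1 then
             let w := U p.1 + f (inner (U p.1) (U p.2)) *: U p.2 in
             (vnorm w)^-1 *: w
           else U k.

Fixpoint traj (R : realType) (n d : nat) (f : R -> R) (U0 : config R n d)
    (I : nat -> 'I_n * 'I_n) (t : nat) : config R n d :=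
  match t with
  | 0 => U0
  | t'.+1 => step f (traj f U0 I t') (I t')
  end.

Definition polarizes (R : realType) (n d : nat) (Useq : nat -> config R n d) : Prop :=
  exists L : config R n d,
    (forall k (c : 'I_d), (fun t => Useq t k 0 c) @ \oo --> L k 0 c) /\
    polarized L.

Definition full_support_distr (R : realType) (n : nat) (D : 'I_n * 'I_n -> R) : Prop :=
  (forall p : 'I_n * 'I_n, p.1 != p.2 -> 0 < D p) /\
  (forall p : 'I_n * 'I_n, p.1 = p.2 -> D p = 0) /\
  \sum_(p : 'I_n * 'I_n) D p = 1.

(* I^(1), I^(2), ... are i.i.d. with law D: the joint law of any initial
   segment is the product law.  (This determines the law of the sequence.) *)
Definition iid_with_law (dT : measure_display) (T : measurableType dT)
    (R : realType) (P : probability T R) (n : nat)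
    (D : 'I_n * 'I_n -> R) (I : nat -> T -> 'I_n * 'I_n) : Prop :=
  (forall t (p : 'I_n * 'I_n), measurable [set w | I t w = p]) /\
  forall (m : nat) (ps : nat -> 'I_n * 'I_n),
    P (\bigcap_(t in [set t | (t < m)%N]) [set w | I t w = ps t])
    = (\prod_(t < m) D (ps t))%:E.

(* Main.v *)
Set Warnings "-all".
Require Import Defs.
From HB Require Import structures.
From mathcomp Require Import all_boot all_order all_algebra.
From mathcomp Require Import all_classical all_reals all_analysis.
From mathcomp Require Import ring lra.
Import Order.TTheory GRing.Theory Num.Theory numFieldNormedType.Exports.
Local Open Scope ring_scope.
Local Open Scope classical_set_scope.
Set Implicit Arguments. Unset Strict Implicit. Unset Printing Implicit Defensive.
Lemma innerC (R : realType) (d : nat) (u v : 'rV[R]_d) : inner u v = inner v u.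
Proof. by rewrite /inner; apply: eq_bigr => k _; rewrite mulrC. Qed.

Lemma innerDl (R : realType) (d : nat) (u v w : 'rV[R]_d) :
  inner (u + v) w = inner u w + inner v w.
Proof. by rewrite /inner -big_split; apply: eq_bigr => k _; rewrite !mxE mulrDl. Qed.

Lemma innerZl (R : realType) (d : nat) (a : R) (u w : 'rV[R]_d) :
  inner (a *: u) w = a * inner u w.
Proof. by rewrite /inner mulr_sumr; apply: eq_bigr => k _; rewrite !mxE mulrA. Qed.

Lemma innerNl (R : realType) (d : nat) (u w : 'rV[R]_d) :
  inner (- u) w = - inner u w.
Proof. by rewrite -scaleN1r innerZl mulN1r. Qed.

Lemma inner_ge0 (R : realType) (d : nat) (u : 'rV[R]_d) : 0 <= inner u u.
Proof. by rewrite /inner; apply: sumr_ge0 => k _; rewrite -expr2 sqr_ge0. Qed.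

Lemma vnorm_sqr (R : realType) (d : nat) (u : 'rV[R]_d) : vnorm u ^+ 2 = inner u u.
Proof. by rewrite /vnorm sqr_sqrtr // inner_ge0. Qed.

Lemma vnorm_ge0 (R : realType) (d : nat) (u : 'rV[R]_d) : 0 <= vnorm u.
Proof. by rewrite /vnorm sqrtr_ge0. Qed.

Lemma unit_inner (R : realType) (d : nat) (u : 'rV[R]_d) : vnorm u = 1 -> inner u u = 1.
Proof. by move=> h; rewrite -vnorm_sqr h expr1n. Qed.

Lemma inner_expand (R : realType) (d : nat) (a b : R) (u v : 'rV[R]_d) :
  inner (a *: u + b *: v) (a *: u + b *: v) =
  a ^+ 2 * inner u u + b ^+ 2 * inner v v + 2 * a * b * inner u v.
Proof.
rewrite innerDl !innerZl ![inner _ (_ + _)]innerC !innerDl !innerZl.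
rewrite (innerC v u); ring.
Qed.

Lemma inner_bound (R : realType) (d : nat) (u v : 'rV[R]_d) :
  inner u u = 1 -> inner v v = 1 -> -1 <= inner u v <= 1.
Proof.
move=> hu hv.
have h1 := inner_ge0 (1 *: u + 1 *: v).
have h2 := inner_ge0 (1 *: u + (-1) *: v).
rewrite inner_expand hu hv in h1; rewrite inner_expand hu hv in h2.
apply/andP; split; nra.
Qed.
Lemma cone_real (R : realType) (N c G p q m : R) :
  0 < N -> N ^+ 2 = 1 + c ^+ 2 + 2 * c * G -> G <= 1 -> 0 <= c -> 0 <= m ->
  m <= p -> m <= q -> m <= N^-1 * (p + c * q).
Proof.
move=> hN hN2 hG hc hm hp hq.
have hN1 : N <= 1 + c by nra.
rewrite mulrC ler_pdivlMr //; nra.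
Qed.

Lemma contr_real (R : realType) (N c G c0 : R) :
  0 <= N -> N ^+ 2 = 1 + c ^+ 2 + 2 * c * G -> 0 <= G -> G <= 1 -> 0 < c0 -> c0 <= c ->
  1 - N^-1 * (G + c) <= 2 / (2 + c0) * (1 - G).
Proof.
move=> hN hN2 hG0 hG1 hc0 hc.
have hN1 : 1 <= N by nra.
have hNp : 0 < N by lra.
have hGc : G + c <= N by nra.
have key : (1 - N^-1 * (G + c)) * (N * (N + G + c)) = (1 - G) * (1 + G).
  have -> : 1 - N^-1 * (G + c) = (N - (G + c)) / N by field; rewrite lt0r_neq0.
  rewrite mulrA. 
  have -> : (N - (G + c)) / N * N = N - (G + c) by field; rewrite lt0r_neq0.
  nra.
have hpos : 0 < N * (N + G + c) by nra.
have hbig : 1 + G + c <= N * (N + G + c) by nra.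
have h1 : 1 - N^-1 * (G + c) = (1 - G) * (1 + G) / (N * (N + G + c)).
  by rewrite -key mulrK // unitfE lt0r_neq0.
rewrite h1 ler_pdivrMr //.
have -> : 2 / (2 + c0) * (1 - G) * (N * (N + G + c)) = 2 * (1 - G) * (N * (N + G + c)) / (2 + c0) by field; lra.
rewrite ler_pdivlMr; last by lra.
have hx : 0 <= 1 - G by lra.
have h3 : (1 + G) * (2 + c0) <= 2 * (N * (N + G + c)) by nra.
nra.
Qed.
Definition Gs (R : realType) (n d : nat) (b : 'I_n -> R) (U : config R n d)
  (i k : 'I_n) : R := b i * b k * inner (U i) (U k).

Definition signs (R : realType) (n : nat) (b : 'I_n -> R) :=
  forall i, b i = 1 \/ b i = -1.

Definition sgprop (R : realType) (f : R -> R) :=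
  forall A : R, -1 <= A <= 1 -> Num.sg (f A) = Num.sg A.

Lemma signs_sq (R : realType) (n : nat) (b : 'I_n -> R) i :
  signs b -> b i * b i = 1.
Proof. by move=> /(_ i) [] ->; rewrite ?mulrNN mulr1. Qed.

Lemma step_other (R : realType) (n d : nat) (f : R -> R) (U : config R n d) p k :
  k != p.1 -> step f U p k = U k.
Proof. by rewrite /step => /negbTE ->. Qed.

Lemma step_fst (R : realType) (n d : nat) (f : R -> R) (U : config R n d) i j :
  step f U (i, j) i =
  (vnorm (U i + f (inner (U i) (U j)) *: U j))^-1 *:
     (U i + f (inner (U i) (U j)) *: U j).
Proof. by rewrite /step eqxx. Qed.

Lemma step_data (R : realType) (n d : nat) (f : R -> R) (b : 'I_n -> R)
    (U : config R n d) (i j : 'I_n) :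
  unit_config U -> signs b -> sgprop f -> 0 <= Gs b U i j ->
  exists c N : R, [/\ 0 <= c, 0 < N, N ^+ 2 = 1 + c ^+ 2 + 2 * c * Gs b U i j,
    c = `|f (inner (U i) (U j))| &
    vnorm (step f U (i, j) i) = 1 /\
    forall x, b i * inner (step f U (i, j) i) x =
              N^-1 * (b i * inner (U i) x + c * (b j * inner (U j) x))].
Proof.
move=> hU hb hf hG.
set A := inner (U i) (U j).
have hA : -1 <= A <= 1 by apply: inner_bound; apply: unit_inner.
have hbi := signs_sq i hb; have hbj := signs_sq j hb.
set c := b i * b j * f A.
have e2 : (b i * b j) * (b i * b j) = 1 by rewrite mulrACA hbi hbj mulr1.
have hfA : f A = b i * b j * c by rewrite /c mulrA e2 mul1r.
have hAG : A = b i * b j * Gs b U i j by rewrite /Gs mulrA e2 mul1r.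
have hfAA : 0 <= f A * A.
  by rewrite -sgr_ge0 sgrM hf // -expr2 sqr_ge0.
have hcG : f A * A = c * Gs b U i j.
  by rewrite hfA hAG mulrACA e2 mul1r.
have hc : 0 <= c.
  have [Gp|G0] := ltrP 0 (Gs b U i j).
    rewrite hcG in hfAA.
    by rewrite -(pmulr_lge0 _ Gp).
  have G0' : Gs b U i j = 0 by apply/eqP; rewrite eq_le G0 hG.
  have A0 : A = 0 by rewrite hAG G0' mulr0.
  have : Num.sg (f A) = 0 by rewrite hf // A0 sgr0.
  by move/eqP; rewrite sgr_eq0 => /eqP fA0; rewrite /c fA0 mulr0.
have hcabs : c = `|f A|.
  have e1 : `|b i * b j| = 1.
    by case: (hb i) => ->; case: (hb j) => ->; rewrite ?mulr1 ?mul1r ?mulrNN ?mulr1 ?normrN normr1.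
  by rewrite -(ger0_norm hc) /c normrM e1 mul1r.
clearbody c.
set w := U i + f A *: U j.
have hw : inner w w = 1 + c ^+ 2 + 2 * c * Gs b U i j.
  have -> : w = 1 *: U i + f A *: U j by rewrite scale1r.
  rewrite inner_expand !unit_inner // -/A.
  have -> : 2 * 1 * f A * A = 2 * (f A * A) by ring.
  rewrite hcG.
  have -> : f A ^+ 2 = c ^+ 2.
    by rewrite hfA exprMn [X in X * _]expr2 e2 mul1r.
  by rewrite expr1n; ring.
have hw1 : 1 <= inner w w by rewrite hw; have := hG; nra.
have hN : vnorm w ^+ 2 = inner w w by rewrite vnorm_sqr.
have hNp : 0 < vnorm w.
  have := vnorm_ge0 w; rewrite le0r => /orP [/eqP h0|//].
  by move: hN hw1; rewrite h0 expr0n /= => <-; rewrite ler10.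
exists c, (vnorm w); split => //; first by rewrite hN hw.
split.
- rewrite step_fst -/A -/w.
  have e : inner ((vnorm w)^-1 *: w) ((vnorm w)^-1 *: w) = 1.
    rewrite innerZl innerC innerZl mulrA -expr2 exprVn hN.
    by rewrite mulVf // gt_eqF // (lt_le_trans ltr01 hw1).
  by rewrite /vnorm e sqrtr1.
- move=> x; rewrite step_fst -/A -/w innerZl innerDl innerZl.
  rewrite mulrCA; congr (_ * _).
  rewrite mulrDr hfA; congr (_ + _).
  by rewrite -!mulrA (mulrA (b i) (b i)) hbi mul1r mulrCA.
Qed.
Definition Inv (R : realType) (n d : nat) (m : R) (b : 'I_n -> R) (U : config R n d) :=
  unit_config U /\ forall i k, m <= Gs b U i k.

Definition Ref (R : realType) (n d : nat) (m : R) (b : 'I_n -> R) (U X : config R n d) :=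
  forall i k, m <= b i * b k * inner (U i) (X k).

Lemma Gs_sym (R : realType) (n d : nat) (b : 'I_n -> R) (U : config R n d) i k :
  Gs b U i k = Gs b U k i.
Proof. by rewrite /Gs innerC (mulrC (b i)). Qed.

Lemma Gs_diag (R : realType) (n d : nat) (b : 'I_n -> R) (U : config R n d) i :
  unit_config U -> signs b -> Gs b U i i = 1.
Proof. by move=> hU hb; rewrite /Gs signs_sq // unit_inner // mulr1. Qed.

Lemma normb (R : realType) (n : nat) (b : 'I_n -> R) i k :
  signs b -> `|b i * b k| = 1.
Proof.
by move=> hb; case: (hb i) => ->; case: (hb k) => ->;
  rewrite ?mulr1 ?mul1r ?mulrNN ?mulr1 ?normrN normr1.
Qed.

Lemma Gs_abs (R : realType) (n d : nat) (b : 'I_n -> R) (U : config R n d) i k :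
  signs b -> `|Gs b U i k| = `|inner (U i) (U k)|.
Proof. by move=> hb; rewrite /Gs normrM normb // mul1r. Qed.

Lemma Gs_le1 (R : realType) (n d : nat) (b : 'I_n -> R) (U : config R n d) i k :
  unit_config U -> signs b -> Gs b U i k <= 1.
Proof.
move=> hU hb; apply: le_trans (ler_norm _) _; rewrite Gs_abs //.
have := inner_bound (unit_inner (hU i)) (unit_inner (hU k)).
by rewrite -ler_norml.
Qed.

Lemma cone_step (R : realType) (n d : nat) (f : R -> R) (b : 'I_n -> R)
    (U : config R n d) (i j : 'I_n) (m beta : R) (x : 'rV[R]_d) :
  unit_config U -> signs b -> sgprop f -> 0 <= Gs b U i j -> 0 <= m ->
  m <= b i * beta * inner (U i) x -> m <= b j * beta * inner (U j) x ->
  m <= b i * beta * inner (step f U (i, j) i) x.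
Proof.
move=> hU hb hf hG hm hi hj.
have [c [N [hc hN hN2 _ [_ hx]]]] := step_data hU hb hf hG.
rewrite mulrAC hx.
have -> : N^-1 * (b i * inner (U i) x + c * (b j * inner (U j) x)) * beta =
   N^-1 * (b i * beta * inner (U i) x + c * (b j * beta * inner (U j) x)) by ring.
apply: (cone_real hN hN2 _ hc hm hi hj); exact: Gs_le1.
Qed.

Lemma Inv_step (R : realType) (n d : nat) (f : R -> R) (b : 'I_n -> R)
    (U : config R n d) (m : R) p :
  signs b -> sgprop f -> 0 <= m -> m <= 1 -> Inv m b U -> Inv m b (step f U p).
Proof.
case: p => i j hb hf hm0 hm1 [hU hG].
have hGij : 0 <= Gs b U i j by apply: le_trans (hG i j).
have [c [N [hc hN hN2 _ [hv _]]]] := step_data hU hb hf hGij.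
have hU' : unit_config (step f U (i, j)).
  move=> k; case: (eqVneq k i) => [->|ki]; first exact: hv.
  by rewrite step_other.
split=> // k1 k2.
case: (eqVneq k1 i) => [->|k1i]; case: (eqVneq k2 i) => [->|k2i].
- by rewrite Gs_diag.
- rewrite /Gs [step f U (i, j) k2]step_other //.
  by apply: cone_step => //; [apply: hG | apply: hG].
- rewrite Gs_sym /Gs [step f U (i, j) k1]step_other //.
  by apply: cone_step => //; [apply: hG | apply: hG].
- by rewrite /Gs !step_other //; apply: hG.
Qed.

Lemma Ref_step (R : realType) (n d : nat) (f : R -> R) (b : 'I_n -> R)
    (U X : config R n d) (m : R) p :
  signs b -> sgprop f -> 0 <= m -> Inv m b U -> Ref m b U X -> Ref m b (step f U p) X.
Proof.
case: p => i j hb hf hm0 [hU hG] hR.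
have hGij : 0 <= Gs b U i j by apply: le_trans (hG i j).
move=> k1 k2.
case: (eqVneq k1 i) => [->|k1i].
- by apply: cone_step => //; apply: hR.
- by rewrite step_other //; apply: hR.
Qed.

Lemma Inv_traj (R : realType) (n d : nat) (f : R -> R) (b : 'I_n -> R)
    (U0 : config R n d) (I : nat -> 'I_n * 'I_n) (m : R) t0 :
  signs b -> sgprop f -> 0 <= m -> m <= 1 -> Inv m b (traj f U0 I t0) ->
  forall s, Inv m b (traj f U0 I (t0 + s)).
Proof.
move=> hb hf hm0 hm1 h0; elim=> [|s IH]; first by rewrite addn0.
by rewrite addnS /=; apply: Inv_step.
Qed.

Lemma Ref_traj (R : realType) (n d : nat) (f : R -> R) (b : 'I_n -> R)
    (U0 : config R n d) (I : nat -> 'I_n * 'I_n) (m : R) t0 :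
  signs b -> sgprop f -> 0 <= m -> m <= 1 -> Inv m b (traj f U0 I t0) ->
  forall s, Ref m b (traj f U0 I (t0 + s)) (traj f U0 I t0).
Proof.
move=> hb hf hm0 hm1 h0; elim=> [|s IH].
  by rewrite addn0 => i k; apply: h0.2.
rewrite addnS /=; apply: Ref_step => //.
exact: Inv_traj.
Qed.

Lemma contr_step (R : realType) (n d : nat) (f : R -> R) (b : 'I_n -> R)
    (U : config R n d) (m0 c0 : R) (i h : 'I_n) :
  signs b -> sgprop f -> 0 < m0 -> 0 < c0 ->
  (forall A, -1 <= A <= 1 -> m0 <= `|A| -> c0 <= `|f A|) ->
  Inv m0 b U -> i != h ->
  1 - Gs b (step f U (i, h)) i h <= 2 / (2 + c0) * (1 - Gs b U i h).
Proof.
move=> hb hf hm0 hc0 hfc [hU hG] ih.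
have hGih : 0 <= Gs b U i h by apply: le_trans (ltW hm0) (hG i h).
have [c [N [hc hN hN2 hcf [hv hx]]]] := step_data hU hb hf hGih.
have hi : h != i by rewrite eq_sym.
have -> : Gs b (step f U (i, h)) i h = N^-1 * (Gs b U i h + c).
  rewrite /Gs [step f U (i, h) h]step_other // mulrAC hx.
  rewrite (unit_inner (hU h)) mulr1.
  have hbh := signs_sq h hb.
  by rewrite -[c in RHS]mulr1 -hbh; ring.
apply: contr_real => //; first exact: ltW.
  exact: Gs_le1.
rewrite hcf; apply: hfc.
  by apply: inner_bound; apply: unit_inner.
by rewrite -(Gs_abs _ _ _ hb) ger0_norm //; apply: hG.
Qed.
Lemma block1 (R : realType) (n d : nat) (f : R -> R) (b : 'I_n -> R)
    (U0 : config R n d) (I : nat -> 'I_n * 'I_n) (m0 c0 : R) (i h : 'I_n) t K :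
  signs b -> sgprop f -> 0 < m0 -> m0 <= 1 -> 0 < c0 ->
  (forall A, -1 <= A <= 1 -> m0 <= `|A| -> c0 <= `|f A|) ->
  Inv m0 b (traj f U0 I t) -> i != h ->
  (forall r, (r < K)%N -> I (t + r)%N = (i, h)) ->
  1 - Gs b (traj f U0 I (t + K)) i h <= (2 / (2 + c0)) ^+ K * (1 - Gs b (traj f U0 I t) i h)
  /\ forall k, k != i -> traj f U0 I (t + K) k = traj f U0 I t k.
Proof.
move=> hb hf hm0 hm1 hc0 hfc hInv ih.
elim: K => [|K IH] hI; first by rewrite addn0 expr0 mul1r.
have [IH1 IH2] : 1 - Gs b (traj f U0 I (t + K)) i h <=
     (2 / (2 + c0)) ^+ K * (1 - Gs b (traj f U0 I t) i h) /\
    forall k, k != i -> traj f U0 I (t + K) k = traj f U0 I t k.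
  by apply: IH => r hr; apply: hI; apply: ltnW.
have hInvK := Inv_traj hb hf (ltW hm0) hm1 hInv K.
rewrite addnS /= hI //; split.
- apply: le_trans (contr_step hb hf hm0 hc0 hfc hInvK ih) _.
  set lam := 2 / (2 + c0).
  rewrite exprS -(mulrA lam); apply: ler_wpM2l => //.
  apply: divr_ge0 => //; lra.
- by move=> k ki; rewrite step_other //; apply: IH2.
Qed.
Definition gmap (n : nat) (o h : 'I_n) (a : nat) : 'I_n :=
  let i := insubd o a in if i == h then o else i.

Definition word (n : nat) (o h : 'I_n) (K : nat) (r : nat) : 'I_n * 'I_n :=
  (gmap o h (r %/ K), h).

Lemma gmap_neq (n : nat) (o h : 'I_n) a : o != h -> gmap o h a != h.
Proof. by rewrite /gmap; case: ifP => // /negbT. Qed.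

Lemma gmap_val (n : nat) (o h : 'I_n) (i : 'I_n) : i != h -> gmap o h (val i) = i.
Proof. by rewrite /gmap valKd => /negbTE ->. Qed.

Lemma blocks (R : realType) (n d : nat) (f : R -> R) (b : 'I_n -> R)
    (U0 : config R n d) (I : nat -> 'I_n * 'I_n) (m0 c0 : R) (o h : 'I_n) t0 K :
  signs b -> sgprop f -> 0 < m0 -> m0 <= 1 -> 0 < c0 ->
  (forall A, -1 <= A <= 1 -> m0 <= `|A| -> c0 <= `|f A|) ->
  Inv m0 b (traj f U0 I t0) -> o != h -> (0 < K)%N ->
  forall a, (forall r, (r < a * K)%N -> I (t0 + r)%N = word o h K r) ->
  traj f U0 I (t0 + a * K) h = traj f U0 I t0 h /\
  forall a', (a' < a)%N ->
    1 - Gs b (traj f U0 I (t0 + a * K)) (gmap o h a') h <= (2 / (2 + c0)) ^+ K.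
Proof.
move=> hb hf hm0 hm1 hc0 hfc hInv oh K0.
set lam := 2 / (2 + c0).
have lam0 : 0 <= lam by rewrite /lam; apply: divr_ge0 => //; lra.
elim=> [|a IH] hI; first by rewrite mul0n addn0.
have [IH1 IH2] := IH (fun r hr => hI r (leq_trans hr (leq_mul (leqnSn a) (leqnn K)))).
set t := (t0 + a * K)%N.
have ht : (t0 + a.+1 * K = t + K)%N by rewrite /t mulSnr addnA.
have hInvt := Inv_traj hb hf (ltW hm0) hm1 hInv (a * K).
have hgh := gmap_neq a oh.
have hIb : forall r, (r < K)%N -> I (t + r)%N = (gmap o h a, h).
  move=> r hr; rewrite /t -addnA hI; last by rewrite mulSnr ltn_add2l.
  by rewrite /word divnMDl // divn_small // addn0.
have [B1 B2] := block1 hb hf hm0 hm1 hc0 hfc hInvt hgh hIb.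
rewrite ht; split.
  by rewrite B2 1?eq_sym // -/t.
move=> a' ha'.
have hG0 : 0 <= Gs b (traj f U0 I t) (gmap o h a) h.
  by apply: le_trans (ltW hm0) _; apply: hInvt.2.
case: (eqVneq (gmap o h a') (gmap o h a)) => [->|hne].
  apply: le_trans B1 _.
  rewrite -[X in _ <= X]mulr1; apply: ler_wpM2l; first exact: exprn_ge0.
  lra.
have ha : (a' < a)%N.
  by move: ha'; rewrite ltnS leq_eqVlt => /orP [/eqP E|//]; rewrite E eqxx in hne.
rewrite /Gs !B2 //; first exact: IH2.
by rewrite eq_sym.
Qed.
Lemma inner_expand3 (R : realType) (d : nat) (a b c : R) (u v w : 'rV[R]_d) :
  inner (a *: u + b *: v + c *: w) (a *: u + b *: v + c *: w) =
  a ^+ 2 * inner u u + b ^+ 2 * inner v v + c ^+ 2 * inner w w +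
  2 * a * b * inner u v + 2 * a * c * inner u w + 2 * b * c * inner v w.
Proof.
rewrite !innerDl !innerZl ![inner _ (_ + _)]innerC !innerDl !innerZl.
rewrite (innerC v u) (innerC w u) (innerC w v); ring.
Qed.

Lemma Gs_tri (R : realType) (n d : nat) (b : 'I_n -> R) (U : config R n d) i k h :
  unit_config U -> signs b ->
  1 - Gs b U i k <= 2 * (1 - Gs b U i h) + 2 * (1 - Gs b U k h).
Proof.
move=> hU hb.
have := inner_ge0 (b i *: U i + (-2 * b h) *: U h + b k *: U k).
rewrite inner_expand3 !unit_inner // !mulr1.
have ei := signs_sq i hb; have eh := signs_sq h hb; have ek := signs_sq k hb.
rewrite /Gs (innerC (U k) (U h)).
rewrite !expr2 ei ek.
have -> : (-2 * b h) * (-2 * b h) = 4 by rewrite mulrACA eh mulr1; ring.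
move: (inner (U i) (U h)) (inner (U i) (U k)) (inner (U h) (U k)) => x y z.
have -> : 2 * b i * (-2 * b h) * x = - 4 * (b i * b h * x) by ring.
have -> : 2 * b i * b k * y = 2 * (b i * b k * y) by ring.
have -> : 2 * (-2 * b h) * b k * z = - 4 * (b k * b h * z) by ring.
lra.
Qed.

Lemma final_block (R : realType) (n d : nat) (f : R -> R) (b : 'I_n -> R)
    (U0 : config R n d) (I : nat -> 'I_n * 'I_n) (m0 c0 : R) (o h : 'I_n) t0 K :
  signs b -> sgprop f -> 0 < m0 -> m0 <= 1 -> 0 < c0 ->
  (forall A, -1 <= A <= 1 -> m0 <= `|A| -> c0 <= `|f A|) ->
  Inv m0 b (traj f U0 I t0) -> o != h -> (0 < K)%N ->
  (forall r, (r < n * K)%N -> I (t0 + r)%N = word o h K r) ->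
  Inv (1 - 4 * (2 / (2 + c0)) ^+ K) b (traj f U0 I (t0 + n * K)).
Proof.
move=> hb hf hm0 hm1 hc0 hfc hInv oh K0 hI.
have [_ B] := blocks hb hf hm0 hm1 hc0 hfc hInv oh K0 hI.
have hU := (Inv_traj hb hf (ltW hm0) hm1 hInv (n * K)).1.
set U := traj f U0 I (t0 + n * K).
set lam := 2 / (2 + c0).
have lam0 : 0 <= lam by rewrite /lam; apply: divr_ge0 => //; lra.
have Bh : forall i, 1 - Gs b U i h <= lam ^+ K.
  move=> i; case: (eqVneq i h) => [->|ih].
    by rewrite Gs_diag // subrr exprn_ge0.
  by rewrite -{1}(gmap_val o ih); apply: B; exact: ltn_ord.
split=> // i k.
have := Gs_tri i k h hU hb.
have := Bh i; have := Bh k; lra.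
Qed.
Lemma coord_sq (R : realType) (d : nat) (u : 'rV[R]_d) c : (u 0 c) ^+ 2 <= inner u u.
Proof.
rewrite /inner (bigD1 c) //= expr2 lerDl; apply: sumr_ge0 => k _.
by rewrite -expr2 sqr_ge0.
Qed.

Lemma inner_diff (R : realType) (d : nat) (a b : R) (u v : 'rV[R]_d) :
  inner (a *: u - b *: v) (a *: u - b *: v) =
  a ^+ 2 * inner u u + b ^+ 2 * inner v v - 2 * a * b * inner u v.
Proof.
have -> : a *: u - b *: v = a *: u + (- b) *: v by rewrite scaleNr.
by rewrite inner_expand sqrrN; ring.
Qed.

Lemma eps_nat (R : realType) (eps : R) : 0 < eps ->
  exists kk : nat, 2 / (kk.+1%:R) < eps ^+ 2.
Proof.
move=> he; have he2 : 0 < eps ^+ 2 by rewrite exprn_gt0.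
exists (Num.Def.trunc (2 / eps ^+ 2)).
have h := truncnS_gt (2 / eps ^+ 2).
set N := (Num.Def.trunc _).+1%:R in h *.
have hN : 0 < N by apply: le_lt_trans h; apply: divr_ge0 => //; exact: ltW.
rewrite ltr_pdivrMr // mulrC -ltr_pdivrMr //.
Qed.

Lemma key_bounds (R : realType) (n d : nat) (f : R -> R) (b : 'I_n -> R)
    (U0 : config R n d) (I : nat -> 'I_n * 'I_n) :
  signs b -> sgprop f ->
  (forall kk : nat, exists t, Inv (1 - (kk.+1%:R)^-1) b (traj f U0 I t)) ->
  forall kk : nat, exists t, forall s, (t <= s)%N ->
    (forall k c, (traj f U0 I t k 0 c - traj f U0 I s k 0 c) ^+ 2 <= 2 / kk.+1%:R) /\
    (forall i k c, (b i * traj f U0 I s i 0 c - b k * traj f U0 I s k 0 c) ^+ 2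
                   <= 2 / kk.+1%:R).
Proof.
move=> hb hf H kk.
have [t ht] := H kk.
have hd0 : 0 < (kk.+1%:R : R)^-1 by rewrite invr_gt0 ltr0n.
have hd1 : (kk.+1%:R : R)^-1 <= 1 by rewrite invf_le1 ?ltr0n // ler1n.
have e2 : 2 / (kk.+1%:R : R) = 2 * (kk.+1%:R)^-1 by [].
rewrite e2; move: ht hd0 hd1; set del := (kk.+1%:R : R)^-1 => ht hd0 hd1.
have hm0 : 0 <= 1 - del by lra.
have hm1 : 1 - del <= 1 by lra.
exists t => s hs.
rewrite -(subnKC hs).
have [hU hG] := Inv_traj hb hf hm0 hm1 ht (s - t).
have hR := Ref_traj hb hf hm0 hm1 ht (s - t).
have hU0 := ht.1.
set U := traj f U0 I (t + (s - t)) in hU hG hR *.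
set V := traj f U0 I t in hU0 hR *.
split.
- move=> k c.
  have := coord_sq (1 *: V k - 1 *: U k) c.
  rewrite inner_diff !unit_inner // !mxE !mulr1 !expr1n !mul1r.
  have := hR k k; rewrite signs_sq // mul1r innerC => hk.
  lra.
- move=> i k c.
  have := coord_sq (b i *: U i - b k *: U k) c.
  rewrite inner_diff !unit_inner // !mxE !mulr1 !expr2 !signs_sq //.
  have := hG i k; rewrite /Gs => hk.
  lra.
Qed.
Lemma sq_lt_abs (R : realType) (x eps : R) : 0 < eps -> x ^+ 2 < eps ^+ 2 -> `|x| < eps.
Proof.
move=> he hx; have h := real_normK (num_real x).
have h0 := normr_ge0 x.
rewrite -h in hx; nra.
Qed.

Lemma conv_polar (R : realType) (n d : nat) (f : R -> R) (b : 'I_n -> R)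
    (U0 : config R n d) (I : nat -> 'I_n * 'I_n) :
  signs b -> sgprop f ->
  (forall kk : nat, exists t, Inv (1 - (kk.+1%:R)^-1) b (traj f U0 I t)) ->
  polarizes (traj f U0 I).
Proof.
move=> hb hf H.
have KB := key_bounds hb hf H.
set tr := traj f U0 I in KB *.
have hcv : forall k c, cvg ((fun t => tr t k 0 c) @ \oo).
  move=> k c; apply: R_complete; apply: cauchy_exP => eps he.
  have [kk hkk] := eps_nat he.
  have [t ht] := KB kk.
  exists (tr t k 0 c); exists t => // s hs.
  apply: sq_lt_abs => //; apply: le_lt_trans hkk.
  exact: (ht s hs).1.
pose L : config R n d := fun k => \row_c lim ((fun t => tr t k 0 c) @ \oo).
have hL : forall k c, (fun t => tr t k 0 c) @ \oo --> L k 0 c.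
  by move=> k c; rewrite /L mxE; exact: hcv.
clearbody L.
exists L; split => // i k.
have hz : forall c, b i * L i 0 c - b k * L k 0 c = 0.
  move=> c.
  have h1 : (fun t => b i * tr t i 0 c - b k * tr t k 0 c) @ \oo -->
            b i * L i 0 c - b k * L k 0 c.
    by apply: cvgB; apply: cvgMr; apply: hL.
  have h2 : (fun t => b i * tr t i 0 c - b k * tr t k 0 c) @ \oo --> (0 : R).
    apply/cvgr0Pnorm_lt => eps he.
    have [kk hkk] := eps_nat he.
    have [t ht] := KB kk.
    exists t => // s hs.
    apply: sq_lt_abs => //; apply: le_lt_trans hkk.
    exact: (ht s hs).2.
  exact: (cvg_unique _ h1 h2).
have ei := signs_sq i hb.
have hLi : forall c, L i 0 c = b i * b k * L k 0 c.
  move=> c; have := hz c; move/eqP; rewrite subr_eq0 => /eqP e.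
  by rewrite -[L i 0 c]mul1r -ei -mulrA e mulrA.
case: (hb i) => bi; case: (hb k) => bk.
- by left; apply/rowP => c; rewrite hLi bi bk mulr1 mul1r.
- by right; apply/rowP => c; rewrite mxE hLi bi bk mul1r mulN1r.
- by right; apply/rowP => c; rewrite mxE hLi bi bk mulr1 mulN1r.
- by left; apply/rowP => c; rewrite hLi bi bk mulrNN mulr1 mul1r.
Qed.
Lemma lam_small (R : realType) (c0 eps : R) : 0 < c0 -> 0 < eps ->
  exists K : nat, (0 < K)%N /\ 4 * (2 / (2 + c0)) ^+ K <= eps.
Proof.
move=> hc he.
set lam := 2 / (2 + c0).
have l0 : 0 <= lam by rewrite /lam; apply: divr_ge0 => //; lra.
have l1 : lam < 1 by rewrite /lam ltr_pdivrMr; lra.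
have := @cvg_expr R lam; rewrite ger0_norm // => /(_ l1).
move=> /cvgr0Pnorm_lt /(_ (eps / 4)) []; first by apply: divr_gt0.
move=> N _ HN.
exists N.+1; split => //.
have := HN N.+1 (leqnSn N); rewrite /= ger0_norm; last exact: exprn_ge0.
move=> h; rewrite -ler_pdivlMl //; first by rewrite mulrC; apply: ltW.
Qed.

Lemma c0_exists (R : realType) (f : R -> R) (m0 : R) :
  stable f -> 0 < m0 -> m0 <= 1 ->
  exists c0, 0 < c0 /\ forall A, -1 <= A <= 1 -> m0 <= `|A| -> c0 <= `|f A|.
Proof.
move=> [hc hs] hm0 hm1.
have sub1 : `[m0, 1] `<=` [set x : R | -1 <= x <= 1].
  move=> x /=; rewrite in_itv /= => /andP [h1 h2]; apply/andP; split => //; lra.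
have sub2 : `[-1, -m0] `<=` [set x : R | -1 <= x <= 1].
  move=> x /=; rewrite in_itv /= => /andP [h1 h2]; apply/andP; split => //; lra.
have [x1 hx1 H1] := EVT_min hm1 (continuous_subspaceW sub1 hc).
have hm0' : -1 <= - m0 by lra.
have [x2 hx2 H2] := EVT_max hm0' (continuous_subspaceW sub2 hc).
move: hx1 hx2; rewrite !in_itv /= => /andP [a1 a2] /andP [b1 b2].
have fx1 : 0 < f x1.
  by rewrite -sgr_gt0 hs ?sgr_gt0; [lra | apply/andP; split; lra].
have fx2 : f x2 < 0.
  by rewrite -sgr_lt0 hs ?sgr_lt0; [lra | apply/andP; split; lra].
exists (Num.min (f x1) (- f x2)); split.
  by rewrite lt_min fx1 /=; lra.
move=> A /andP [hA1 hA2] hmA.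
case: (lerP 0 A) => hA.
- rewrite ger0_norm // in hmA.
  have := H1 A; rewrite in_itv /= hmA hA2 => /(_ isT) h.
  rewrite ge_min; apply/orP; left; apply: le_trans h (ler_norm _).
- rewrite ltr0_norm // in hmA.
  have := H2 A; rewrite in_itv /= hA1 => /(_ _) h.
  have h' : f A <= f x2 by apply: h; apply/andP; split; lra.
  rewrite ge_min; apply/orP; right; rewrite -normrN; apply: le_trans (ler_norm _); lra.
Qed.
Definition cyl (n : nat) (T : Type) (I : nat -> T -> 'I_n * 'I_n) (m : nat)
  (s : {ffun 'I_m -> 'I_n * 'I_n}) : set T :=
  [set w | forall i : 'I_m, I i w = s i].

Definition ext (n m : nat) (p0 : 'I_n * 'I_n) (s : {ffun 'I_m -> 'I_n * 'I_n}) (t : nat) :=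
  if insub t is Some i then s i else p0.

Lemma cylE (n : nat) (T : Type) (I : nat -> T -> 'I_n * 'I_n) m
  (s : {ffun 'I_m -> 'I_n * 'I_n}) (p0 : 'I_n * 'I_n) :
  cyl I s = \bigcap_(t in [set t | (t < m)%N]) [set w | I t w = ext p0 s t].
Proof.
apply/seteqP; split => w /= h.
- move=> t /= ht; rewrite /ext insubT /=; exact: (h (Ordinal ht)).
- move=> i; have := h (val i) (ltn_ord i); rewrite /ext valK; exact.
Qed.

Lemma meas_cyl (n : nat) (dT : measure_display) (T : measurableType dT)
  (I : nat -> T -> 'I_n * 'I_n) m (s : {ffun 'I_m -> 'I_n * 'I_n}) (p0 : 'I_n * 'I_n) :
  (forall t p, measurable [set w | I t w = p]) -> measurable (cyl I s).
Proof.
move=> hm; rewrite (cylE _ _ p0); apply: bigcap_measurableType => k _; exact: hm.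
Qed.

Lemma prob_cyl (R : realType) (n : nat) (dT : measure_display) (T : measurableType dT)
  (P : probability T R) (D : 'I_n * 'I_n -> R)
  (I : nat -> T -> 'I_n * 'I_n) m (s : {ffun 'I_m -> 'I_n * 'I_n}) (p0 : 'I_n * 'I_n) :
  iid_with_law P D I -> P (cyl I s) = (\prod_(i < m) D (s i))%:E.
Proof.
move=> [_ hP]; rewrite (cylE _ _ p0) hP; congr (_%:E).
by apply: eq_bigr => i _; rewrite /ext valK.
Qed.
Definition Cw (n : nat) (T : Type) (I : nat -> T -> 'I_n * 'I_n) (L : nat)
  (wd : nat -> 'I_n * 'I_n) (m : nat) : set T :=
  [set w | forall r, (r < L)%N -> I (m + r)%N w = wd r].

Definition catw (n m L : nat) (s : {ffun 'I_m -> 'I_n * 'I_n}) (wd : nat -> 'I_n * 'I_n) :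
  {ffun 'I_(m + L) -> 'I_n * 'I_n} :=
  [ffun i => match fintype.split i with inl a => s a | inr b => wd (val b) end].
Arguments catw {n m} L s wd.

Lemma cyl_cat (n : nat) (T : Type) (I : nat -> T -> 'I_n * 'I_n) m L
  (s : {ffun 'I_m -> 'I_n * 'I_n}) (wd : nat -> 'I_n * 'I_n) :
  cyl I (catw L s wd) = cyl I s `&` Cw I L wd m.
Proof.
apply/seteqP; split => w /=.
- move=> h; split.
  + move=> a; have := h (lshift L a); rewrite /catw ffunE -/(unsplit (inl a)) unsplitK.
    by [].
  + move=> r hr; have := h (rshift m (Ordinal hr)).
    by rewrite /catw ffunE -/(unsplit (inr (Ordinal hr))) unsplitK.
- move=> [h1 h2] i; rewrite /catw ffunE.
  case: splitP => [a ea|b eb].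
  + by rewrite -(h1 a) ea.
  + by rewrite -(h2 _ (ltn_ord b)) eb.
Qed.

Lemma prod_cat (R : realType) (n : nat) (D : 'I_n * 'I_n -> R) m L
  (s : {ffun 'I_m -> 'I_n * 'I_n}) (wd : nat -> 'I_n * 'I_n) :
  \prod_(i < m + L) D (catw L s wd i) = \prod_(i < m) D (s i) * \prod_(r < L) D (wd r).
Proof.
rewrite big_split_ord /=; congr (_ * _); apply: eq_bigr => i _;
  rewrite /catw ffunE.
- by rewrite -/(unsplit (inl i)) unsplitK.
- by rewrite -/(unsplit (inr i)) unsplitK.
Qed.

Lemma meas_Cw (n : nat) (dT : measure_display) (T : measurableType dT)
  (I : nat -> T -> 'I_n * 'I_n) L (wd : nat -> 'I_n * 'I_n) m :
  (forall t p, measurable [set w | I t w = p]) -> measurable (Cw I L wd m).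
Proof.
move=> hm.
have -> : Cw I L wd m = \bigcap_(r in [set r | (r < L)%N]) [set w | I (m + r)%N w = wd r].
  by apply/seteqP; split => w /= h r hr; apply: h.
by apply: bigcap_measurableType => k _; exact: hm.
Qed.

Definition detm (n : nat) (T : Type) (I : nat -> T -> 'I_n * 'I_n) (m : nat) (A : set T) :=
  forall w w', (forall t, (t < m)%N -> I t w = I t w') -> A w -> A w'.

Lemma prob_step (R : realType) (n : nat) (dT : measure_display) (T : measurableType dT)
  (P : probability T R) (D : 'I_n * 'I_n -> R)
  (I : nat -> T -> 'I_n * 'I_n) m L (wd : nat -> 'I_n * 'I_n) (A : set T) :
  iid_with_law P D I -> detm I m A ->
  P (A `&` Cw I L wd m) = ((\prod_(r < L) D (wd r))%:E * P A)%E.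
Proof.
move=> hiid hdet.
have hm := hiid.1.
pose p0 := wd 0%N.
pose S := [set s : {ffun 'I_m -> 'I_n * 'I_n} | exists w, A w /\ forall i : 'I_m, I i w = s i].
have hA : A = \bigcup_(s in S) cyl I s.
  apply/seteqP; split => w.
  - move=> Aw; exists [ffun i : 'I_m => I i w]; first by exists w; split => // i; rewrite ffunE.
    by move=> i; rewrite ffunE.
  - move=> [s [w' [Aw' hw']] hs]; apply: (hdet w') => // t ht.
    by have := hw' (Ordinal ht); have := hs (Ordinal ht) => /= -> ->.
have hAC : A `&` Cw I L wd m = \bigcup_(s in S) cyl I (catw L s wd).
  rewrite hA setI_bigcupl; apply/seteqP; split => w [s Ss hw]; exists s => //.
    by rewrite cyl_cat.
  by rewrite -cyl_cat.
have triv1 : trivIset S (fun s => cyl I s).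
  move=> s s' _ _ [w [h1 h2]]; apply/ffunP => i; by rewrite -h1 -h2.
have triv2 : trivIset S (fun s => cyl I (catw L s wd)).
  move=> s s' _ _ [w]; rewrite !cyl_cat => [[[h1 _] [h2 _]]].
  by apply/ffunP => i; rewrite -h1 -h2.
rewrite hAC [in RHS]hA !measure_fin_bigcup //; try exact: finite_finset;
  try (by move=> s _; apply: meas_cyl p0 hm).
rewrite (eq_fsbigr (fun s : {ffun 'I_m -> 'I_n * 'I_n} => ((\prod_(i < m) D (s i)) * \prod_(r < L) D (wd r))%:E)); last first.
  by move=> s _; apply: (etrans (prob_cyl _ p0 hiid)); rewrite prod_cat.
rewrite [in RHS](eq_fsbigr (fun s : {ffun 'I_m -> 'I_n * 'I_n} => (\prod_(i < m) D (s i))%:E) S); last first.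
  by move=> s _; exact: (prob_cyl _ p0 hiid).
rewrite !fsumEFin; try exact: finite_finset.
rewrite -EFinM; congr (_%:E).
rewrite fsbig_distrr; last exact: finite_finset.
by apply: eq_fsbigr => s _; rewrite mulrC.
Qed.
Definition Fn (n : nat) (T : Type) (I : nat -> T -> 'I_n * 'I_n) (L : nat)
  (wd : nat -> 'I_n * 'I_n) (N : nat) : set T :=
  [set w | forall j, (j < N)%N -> ~ Cw I L wd (j * L) w].

Lemma Fn_det (n : nat) (T : Type) (I : nat -> T -> 'I_n * 'I_n) L wd N :
  detm I (N * L) (Fn I L wd N).
Proof.
move=> w w' hww' hw j hj hC; apply: (hw j hj) => r hr.
rewrite hww'; first exact: hC.
have : (j.+1 * L <= N * L)%N by rewrite leq_mul2r hj orbT.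
by rewrite mulSn => h; apply: leq_trans h; rewrite addnC ltn_add2r.
Qed.

Lemma Fn_S (n : nat) (T : Type) (I : nat -> T -> 'I_n * 'I_n) L wd N :
  Fn I L wd N.+1 = Fn I L wd N `&` ~` Cw I L wd (N * L).
Proof.
apply/seteqP; split => w /=.
- move=> h; split; first by move=> j hj; apply: h; apply: ltnW.
  by apply: h.
- move=> [h1 h2] j; rewrite ltnS leq_eqVlt => /orP [/eqP ->|hj] //.
  exact: h1.
Qed.

Lemma Fn_meas (n : nat) (dT : measure_display) (T : measurableType dT)
  (I : nat -> T -> 'I_n * 'I_n) L wd N :
  (forall t p, measurable [set w | I t w = p]) -> measurable (Fn I L wd N).
Proof.
move=> hm; elim: N => [|N IH].
  have -> : Fn I L wd 0 = setT by apply/seteqP; split => w //= _ j.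
  exact: measurableT.
rewrite Fn_S; apply: measurableI => //; apply: measurableC; exact: meas_Cw.
Qed.

Lemma Fn_prob (R : realType) (n : nat) (dT : measure_display) (T : measurableType dT)
  (P : probability T R) (D : 'I_n * 'I_n -> R)
  (I : nat -> T -> 'I_n * 'I_n) L (wd : nat -> 'I_n * 'I_n) :
  iid_with_law P D I ->
  forall N, P (Fn I L wd N) = ((1 - \prod_(r < L) D (wd r)) ^+ N)%:E.
Proof.
move=> hiid; have hm := hiid.1.
set p := \prod_(r < L) D (wd r).
elim=> [|N IH].
  have -> : Fn I L wd 0 = setT by apply/seteqP; split => w //= _ j.
  by rewrite probability_setT expr0.
have hF := Fn_meas L wd N hm.
have hC := meas_Cw L wd (N * L) hm.
have hU : P (Fn I L wd N) = (P (Fn I L wd N `&` Cw I L wd (N * L)) +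
                            P (Fn I L wd N `&` ~` Cw I L wd (N * L)))%E.
  rewrite -measureU; first by rewrite -setIUr setUCr setIT.
  - exact: measurableI.
  - by apply: measurableI => //; exact: measurableC.
  - by rewrite setIACA setICr setI0.
rewrite (prob_step L wd hiid (@Fn_det _ _ I L wd N)) in hU.
rewrite IH -Fn_S in hU.
have hfin : P (Fn I L wd N.+1) \is a fin_num.
  by apply: fin_num_measure; exact: Fn_meas.
rewrite -(fineK hfin) in hU *.
rewrite -EFinM -EFinD in hU; have hU2 := EFin_inj hU.
congr (_%:E); rewrite exprS -/p in hU2 *.
apply: (addrI (p * (1 - p) ^+ N)); rewrite -hU2; ring.
Qed.
Lemma word_occurs (R : realType) (n : nat) (dT : measure_display) (T : measurableType dT)
  (P : probability T R) (D : 'I_n * 'I_n -> R)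
  (I : nat -> T -> 'I_n * 'I_n) L (wd : nat -> 'I_n * 'I_n) :
  iid_with_law P D I -> 0 < \prod_(r < L) D (wd r) ->
  P.-negligible [set w | ~ exists j, Cw I L wd (j * L) w].
Proof.
move=> hiid hp; have hm := hiid.1.
set p := \prod_(r < L) D (wd r) in hp.
have hFP := Fn_prob L wd hiid; rewrite -/p in hFP.
exists (\bigcap_N Fn I L wd N); split.
- by apply: bigcapT_measurable => N; exact: Fn_meas.
- have hB : measurable (\bigcap_N Fn I L wd N).
    by apply: bigcapT_measurable => N; exact: Fn_meas.
  have hfin : P (\bigcap_N Fn I L wd N) \is a fin_num by apply: fin_num_measure.
  rewrite -(fineK hfin); set r := fine _.
  have hr0 : 0 <= r.
    by rewrite /r; apply: fine_ge0; apply: measure_ge0.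
  have hrN : forall N, r <= (1 - p) ^+ N.
    move=> N; rewrite -lee_fin /r fineK // -hFP.
    apply: le_measure; rewrite ?inE //; first exact: Fn_meas.
    by move=> w /(_ N Logic.I).
  have hq0 : 0 <= 1 - p by have := hrN 1%N; rewrite expr1 => h; lra.
  have hq1 : 1 - p < 1 by lra.
  case: (eqVneq r 0) => [-> //|rn0].
  have rp : 0 < r by rewrite lt0r rn0.
  have := @cvg_expr R (1 - p); rewrite ger0_norm // => /(_ hq1).
  move=> /cvgr0Pnorm_lt /(_ r rp) [N _ HN].
  have := HN N (leqnn N); rewrite /= ger0_norm ?exprn_ge0 // => h.
  exfalso; have := hrN N; lra.
- move=> w /= hw N _ j hj hC; apply: hw; by exists j.
Qed.
Lemma Inv_mono (R : realType) (n d : nat) (m m' : R) (b : 'I_n -> R) (U : config R n d) :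
  m' <= m -> Inv m b U -> Inv m' b U.
Proof. by move=> hm [hU hG]; split => // i k; apply: le_trans hm (hG i k). Qed.

Theorem mainTheorem6 (R : realType) (d n : nat) (f : R -> R)
    (D : 'I_n * 'I_n -> R)
    (dT : measure_display) (T : measurableType dT) (P : probability T R)
    (I : nat -> T -> 'I_n * 'I_n) (U0 : config R n d) :
  (2 <= d)%N -> (2 <= n)%N ->
  stable f ->
  full_support_distr D ->
  iid_with_law P D I ->
  unit_config U0 ->
  strictly_convex U0 ->
  {ae P, forall w, polarizes (traj f U0 (fun t => I t w))}.
Proof.
move=> _ hn hstab [hDpos _] hiid hU0 [b [hb hbpos]].
rewrite /prop_near1 /nbhs /= /almost_everywhere.
have hf : sgprop f by case: hstab.
have hG0 : forall i j, 0 < Gs b U0 i j.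
  move=> i j; have := hbpos i j.
  by rewrite innerZl innerC innerZl /Gs innerC mulrA.
pose m0 := \big[Num.min/1]_(p : 'I_n * 'I_n) Gs b U0 p.1 p.2.
have hm0 : 0 < m0 by apply: lt_bigmin => // p _; exact: hG0.
have hm1 : m0 <= 1 by exact: bigmin_le_id.
have hInv0 : Inv m0 b U0.
  split => // i j; exact: (bigmin_le _ (i, j)).
have [c0 [hc0 hfc]] := c0_exists hstab hm0 hm1.
have hn0 : (0 < n)%N by apply: leq_trans hn.
pose h : 'I_n := Ordinal hn0.
pose o : 'I_n := Ordinal hn.
have oh : o != h by [].
have hK : forall kk : nat, exists K : nat,
    (0 < K)%N /\ 4 * (2 / (2 + c0)) ^+ K <= (kk.+1%:R : R)^-1.
  by move=> kk; apply: lam_small => //; rewrite invr_gt0 ltr0n.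
have [Kf hKf] := choice hK.
pose Nk := fun kk : nat =>
  [set w | ~ exists j, Cw I (n * Kf kk) (word o h (Kf kk)) (j * (n * Kf kk)) w].
have hNk : forall kk, P.-negligible (Nk kk).
  move=> kk; apply: (word_occurs hiid).
  apply: prodr_gt0 => r _; apply: hDpos => /=.
  exact: gmap_neq.
apply: (negligibleS _ (negligible_bigcup hNk)).
move=> w /= hw; apply: contrapT => hnot; apply: hw.
apply: (conv_polar hb hf) => kk.
have [j hj] : exists j, Cw I (n * Kf kk) (word o h (Kf kk)) (j * (n * Kf kk)) w.
  by apply: contrapT => hc; apply: hnot; exists kk.
have [K0 hK4] := hKf kk.
set K := Kf kk in hj K0 hK4.
set t0 := (j * (n * K))%N.
have hInvt0 : Inv m0 b (traj f U0 (fun t => I t w) t0).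
  have := @Inv_traj _ _ _ f b U0 (fun t => I t w) m0 0 hb hf (ltW hm0) hm1 hInv0 t0.
  by rewrite add0n.
have := final_block hb hf hm0 hm1 hc0 hfc hInvt0 oh K0 hj.
move=> hfin; exists (t0 + n * K)%N.
by apply: Inv_mono hfin; rewrite lerD2l lerN2.
Qed.
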